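(* For every $n\in\mathbb{N}$, $\mathrm{C}_{\{0,\ldots,n\}}<_{sW}\mathrm{C}_{\sharp=n+1}$.
   Context: Represented spaces carry partial surjections $\delta:\subseteq\mathbb{N}^\mathbb{N}\to X$; a realizer $F$ of $f$ satisfies $\delta_YF(p)\in f(\delta_X(p))$ for $p\in\operatorname{dom}(f\delta_X)$. $f\leq_{sW}g$ iff there are computable partial $K,H$ on Baire space with $KGH$ realizing $f$ for every realizer $G$ of $g$; $f<_{sW}g$ means $f\leq_{sW}g$ and $g\not\leq_{sW}f$. $\mathrm{C}_{\{0,\ldots,n\}}$ is closed choice on the discrete space $\{0,\ldots,n\}$: given a non-empty subset via an enumeration of its complement, output an element. Closed subsets of Cantor space are named by binary trees (set of infinite paths); $\mathrm{C}_{\sharp=m}$ is the restriction of $\mathrm{C}_{\{0,1\}^\mathbb{N}}$ (output any point of the given non-empty closed set) to trees having exactly $m$ vertices at each level $k$ with $2^k\geq m$ and in which, from some finite depth on, every vertex has exactly one child. *)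

(* Defs.v *)
From mathcomp Require Import all_boot.

Set Implicit Arguments.
Unset Strict Implicit.
Unset Printing Implicit Defensive.

Definition baire := nat -> nat.

Inductive rprog : Type :=
| rZero : rprog
| rSucc : rprog
| rProj : nat -> rprog
| rComp : rprog -> seq rprog -> rprog
| rPrim : rprog -> rprog -> rprog
| rMin  : rprog -> rprog.

Inductive evalR : rprog -> seq nat -> nat -> Prop :=
| ev_zero xs : evalR rZero xs 0
| ev_succ x xs : evalR rSucc (x :: xs) x.+1
| ev_proj i xs : i < size xs -> evalR (rProj i) xs (nth 0 xs i)
| ev_comp f gs xs ys z :
    evalL gs xs ys -> evalR f ys z -> evalR (rComp f gs) xs z
| ev_prim0 f g xs y : evalR f xs y -> evalR (rPrim f g) (0 :: xs) y
| ev_primS f g n xs r y :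
    evalR (rPrim f g) (n :: xs) r -> evalR g (n :: r :: xs) y ->
    evalR (rPrim f g) (n.+1 :: xs) y
| ev_min f xs n :
    evalR f (n :: xs) 0 ->
    (forall m, m < n -> exists k, evalR f (m :: xs) k.+1) ->
    evalR (rMin f) xs n
with evalL : seq rprog -> seq nat -> seq nat -> Prop :=
| evL_nil xs : evalL [::] xs [::]
| evL_cons g gs xs y ys :
    evalR g xs y -> evalL gs xs ys -> evalL (g :: gs) xs (y :: ys).

Definition cpair (n m : nat) : nat := ((n + m) * (n + m).+1) %/ 2 + m.
Fixpoint code_seq (s : seq nat) : nat :=
  if s is x :: s' then (cpair x (code_seq s')).+1 else 0.

Definition prefix (p : baire) (k : nat) : seq nat := mkseq p k.

(** The program [P] computes output digit [n] on input [p] as [m] iff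
    on queries <n, code(p|k)> for k = 0,1,2,... it answers 0 ("need more
    input") until it first answers m+1. *)
Definition t2out (P : rprog) (p : baire) (n m : nat) : Prop :=
  exists k, evalR P [:: cpair n (code_seq (prefix p k))] m.+1 /\
    forall j, j < k -> evalR P [:: cpair n (code_seq (prefix p j))] 0.

Definition t2comp (P : rprog) (p q : baire) : Prop :=
  forall n, t2out P p n (q n).

Record rep := Rep {
  car : Type;
  delta : baire -> car -> Prop   (* graph of the partial representation *)
}.

Record mvf (X Y : rep) := Mvf {
  mdom : car X -> Prop;
  mval : car X -> car Y -> Prop
}.
Arguments delta : clear implicits.
Arguments mdom {X Y}.
Arguments mval {X Y}.

Definition realizes (X Y : rep) (f : mvf X Y)
    (D : baire -> Prop) (F : baire -> baire) : Prop :=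
  forall p x, delta X p x -> mdom f x ->
    D p /\ exists y, delta Y (F p) y /\ mval f x y.

Definition sW_le (X Y Z W : rep) (f : mvf X Y) (g : mvf Z W) : Prop :=
  exists K H : rprog,
    forall (D : baire -> Prop) (G : baire -> baire), realizes g D G ->
      forall p x, delta X p x -> mdom f x ->
        exists q, t2comp H p q /\ D q /\
          exists r, t2comp K (G q) r /\
            exists y, delta Y r y /\ mval f x y.

Definition sW_lt (X Y Z W : rep) (f : mvf X Y) (g : mvf Z W) : Prop :=
  sW_le f g /\ ~ sW_le g f.

Definition discr (n : nat) : rep :=
  @Rep 'I_n.+1 (fun p i => p 0 = i).

(** closed subsets of {0..n}, named by an enumeration of the complement
    (k is listed as k+1; 0 means "nothing") *)
Definition closed_discr (n : nat) : rep :=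
  @Rep {set 'I_n.+1}
    (fun p A => forall i : 'I_n.+1, i \in A <-> (forall k, p k <> (i : nat).+1)).

Definition C_fin (n : nat) : mvf (closed_discr n) (discr n) :=
  @Mvf (closed_discr n) (discr n) (fun A => A != set0) (fun A i => i \in A).

Definition cantor : rep :=
  @Rep (nat -> bool) (fun p x => forall k, p k = nat_of_bool (x k)).

(** bijective coding of binary words by naturals *)
Fixpoint wcode (w : seq bool) : nat :=
  if w is b :: w' then (wcode w').*2 + b + 1 else 0.

Definition inT (p : baire) (w : seq bool) : bool := p (wcode w) == 1.

(** [p] is the characteristic function of a binary tree (prefix closed);
    words are read from the root, children of [w] are [rcons w b] *)
Definition is_tree (p : baire) : Prop :=
  (forall i, p i <= 1) /\ (forall w b, inT p (rcons w b) -> inT p w).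

Definition bprefix (x : nat -> bool) (k : nat) : seq bool := mkseq x k.

Definition closed_cantor : rep :=
  @Rep ((nat -> bool) -> Prop)
    (fun p A => is_tree p /\ forall x, A x <-> (forall k, inT p (bprefix x k))).

Definition C_cantor : mvf closed_cantor cantor :=
  @Mvf closed_cantor cantor (fun A => exists x, A x) (fun A x => A x).

Fixpoint words (k : nat) : seq (seq bool) :=
  if k is k'.+1 then [seq b :: w | b <- [:: false; true], w <- words k']
  else [:: [::]].

Definition tree_sharp (m : nat) (p : baire) : Prop :=
  (forall k, m <= 2 ^ k -> count (inT p) (words k) = m) /\
  (exists d, forall w, d <= size w -> inT p w ->
      inT p (rcons w false) != inT p (rcons w true)).

Definition closed_sharp (m : nat) : rep :=
  @Rep ((nat -> bool) -> Prop)
    (fun p A => delta closed_cantor p A /\ tree_sharp m p).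

(** C_{#=m}: restriction of C_{2^N} to such names *)
Definition C_sharp (m : nat) : mvf (closed_sharp m) cantor :=
  @Mvf (closed_sharp m) cantor (fun A => exists x, A x) (fun A x => A x).

(* Main.v *)
Require Import Defs.
From mathcomp Require Import all_boot.
From mathcomp Require Import ring zify.
From Stdlib Require Import ClassicalEpsilon.
Set Implicit Arguments. Unset Strict Implicit. Unset Printing Implicit Defensive.

Fixpoint evalR_det P xs z (d : evalR P xs z) {struct d} :
  forall z', evalR P xs z' -> z = z'
with evalL_det gs xs ys (d : evalL gs xs ys) {struct d} :
  forall ys', evalL gs xs ys' -> ys = ys'.
Proof.
- destruct d as [xs|x xs|i xs Hi|f gs xs ys z dL dR|f g xs y d0|f g n xs r y d1 d2|f xs n d0 Hlt];
   intros z' d'.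
  + inversion d'; auto.
  + inversion d'; auto.
  + inversion d'; auto.
  + have IL := evalL_det _ _ _ dL. have IR := evalR_det _ _ _ dR.
    inversion d'; subst.
    match goal with H : evalL _ _ _ |- _ => have E := IL _ H end; subst.
    match goal with H : evalR f _ _ |- _ => exact: (IR _ H) end.
  + have I0 := evalR_det _ _ _ d0.
    inversion d'; subst. 
    match goal with H : evalR f _ _ |- _ => exact: (I0 _ H) end.
  + have I1 := evalR_det _ _ _ d1. have I2 := evalR_det _ _ _ d2.
    inversion d'; subst.
    match goal with H : evalR (rPrim _ _) _ _ |- _ => have E := I1 _ H end; subst.
    match goal with H : evalR g _ _ |- _ => exact: (I2 _ H) end.
  + have I0 := evalR_det _ _ _ d0.
    have IL : forall m, m < n -> forall z'', evalR f (m :: xs) z'' -> exists k, z'' = k.+1.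
      move=> m Hm z'' Hz. case: (Hlt m Hm) => k Hk. exists k.
      exact: (esym (evalR_det _ _ _ Hk _ Hz)).
    clear Hlt d0.
    inversion d'; subst.
    case: (ltngtP n z') => // Hc.
    * have [k Hk] := H1 _ Hc.
      by have := I0 _ Hk.
    * match goal with H : evalR f (z' :: _) 0 |- _ => have [k Hk] := IL _ Hc _ H end. by [].
- destruct d as [xs|g gs xs y ys dR dL]; intros ys' d'.
  + by inversion d'.
  + have I1 := evalR_det _ _ _ dR. have I2 := evalL_det _ _ _ dL.
    inversion d'; subst.
    match goal with H : evalR g _ _ |- _ => have E1 := I1 _ H end.
    match goal with H : evalL gs _ _ |- _ => have E2 := I2 _ H end. by subst.
Qed.

Lemma t2out_det P p n m1 m2 : t2out P p n m1 -> t2out P p n m2 -> m1 = m2.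
Proof.
case=> k1 [E1 L1] [k2 [E2 L2]].
case: (ltngtP k1 k2) => H.
- by have := evalR_det E1 (L2 _ H).
- by have := evalR_det E2 (L1 _ H).
- subst. by have [] := evalR_det E1 E2.
Qed.

Lemma t2comp_det P p q1 q2 : t2comp P p q1 -> t2comp P p q2 -> q1 =1 q2.
Proof. by move=> H1 H2 n; apply: t2out_det (H1 n) (H2 n). Qed.


Definition rcomp a (f : seq nat -> nat) :=
  exists P, forall xs, size xs = a -> evalR P xs (f xs).

Lemma c_ext a f g : (forall xs, size xs = a -> f xs = g xs) -> rcomp a f -> rcomp a g.
Proof. by move=> E [P HP]; exists P => xs Hs; rewrite -E //; apply: HP. Qed.

Fixpoint allc a (gs : seq (seq nat -> nat)) : Prop :=
  if gs is g :: gs' then rcomp a g /\ allc a gs' else True.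

Lemma allcP a gs : allc a gs ->
  exists Ps, forall xs, size xs = a -> evalL Ps xs (map (fun g => g xs) gs).
Proof.
elim: gs => [|g gs IH] /=.
  by move=> _; exists [::] => xs _; constructor.
case=> [[P HP] /IH [Ps HPs]]; exists (P :: Ps) => xs Hs; constructor; auto.
Qed.

Lemma c_compL a b f gs : rcomp b f -> size gs = b -> allc a gs ->
  rcomp a (fun xs => f (map (fun g => g xs) gs)).
Proof.
move=> [P HP] Hb /allcP [Ps HPs]; exists (rComp P Ps) => xs Hs.
apply: ev_comp (HPs _ Hs) _; apply: HP; by rewrite size_map.
Qed.

Lemma c_var a i : i < a -> rcomp a (fun xs => nth 0 xs i).
Proof. by move=> Hi; exists (rProj i) => xs Hs; constructor; rewrite Hs. Qed.

Arguments c_var : clear implicits.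
Lemma c_zero a : rcomp a (fun _ => 0).
Proof. by exists rZero => xs _; constructor. Qed.

Arguments c_zero : clear implicits.
Lemma c_succ a f : rcomp a f -> rcomp a (fun xs => (f xs).+1).
Proof.
move=> [P HP]; exists (rComp rSucc [:: P]) => xs Hs.
apply: (@ev_comp _ _ _ [:: f xs]); first by constructor; [apply: HP|constructor].
constructor.
Qed.

Lemma c_const a c : rcomp a (fun _ => c).
Proof. elim: c => [|c IH]; [exact: c_zero | exact: c_succ IH]. Qed.

Arguments c_const : clear implicits.
Fixpoint prec (f : seq nat -> nat) (g : nat -> nat -> seq nat -> nat) n ys :=
  if n is n'.+1 then g n' (prec f g n' ys) ys else f ys.

Lemma c_prec a f g : rcomp a f ->
  rcomp a.+2 (fun xs => g (nth 0 xs 0) (nth 0 xs 1) (drop 2 xs)) ->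
  rcomp a.+1 (fun xs => prec f g (nth 0 xs 0) (behead xs)).
Proof.
move=> [Pf Hf] [Pg Hg]; exists (rPrim Pf Pg) => [[|n ys]] //= [Hs].
elim: n => [|n IH] /=; first by constructor; apply: Hf.
apply: ev_primS IH _.
have := Hg [:: n, prec f g n ys & ys]; rewrite /= drop0; apply; by rewrite Hs.
Qed.

Lemma c_app1 a (f : nat -> nat) g : rcomp 1 (fun xs => f (nth 0 xs 0)) -> rcomp a g ->
  rcomp a (fun xs => f (g xs)).
Proof. by move=> Hf Hg; apply: (c_compL (gs := [:: g]) Hf). Qed.

Lemma c_app2 a (f : nat -> nat -> nat) g1 g2 :
  rcomp 2 (fun xs => f (nth 0 xs 0) (nth 0 xs 1)) -> rcomp a g1 -> rcomp a g2 ->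
  rcomp a (fun xs => f (g1 xs) (g2 xs)).
Proof. by move=> Hf H1 H2; apply: (c_compL (gs := [:: g1; g2]) Hf). Qed.

Lemma c_app3 a (f : nat -> nat -> nat -> nat) g1 g2 g3 :
  rcomp 3 (fun xs => f (nth 0 xs 0) (nth 0 xs 1) (nth 0 xs 2)) ->
  rcomp a g1 -> rcomp a g2 -> rcomp a g3 ->
  rcomp a (fun xs => f (g1 xs) (g2 xs) (g3 xs)).
Proof. by move=> Hf H1 H2 H3; apply: (c_compL (gs := [:: g1; g2; g3]) Hf). Qed.

Lemma size2 (xs : seq nat) : size xs = 2 -> xs = [:: nth 0 xs 0; nth 0 xs 1].
Proof. by case: xs => [|x [|y [|]]]. Qed.

Lemma nth_drop2 (xs : seq nat) : nth 0 (drop 2 xs) 0 = nth 0 xs 2.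
Proof. by rewrite nth_drop. Qed.

Lemma c_add0 : rcomp 2 (fun xs => nth 0 xs 0 + nth 0 xs 1).
Proof.
have H := c_prec (g := fun _ r _ => r.+1) ((c_var 1 0 erefl))
  (c_succ ((c_var 3 1 erefl))).
apply: c_ext H => xs /size2 -> /=.
by elim: (nth 0 xs 0) => //= n ->.
Qed.

Lemma c_add a f g : rcomp a f -> rcomp a g -> rcomp a (fun xs => f xs + g xs).
Proof. exact: c_app2 c_add0. Qed.

Lemma c_mul0 : rcomp 2 (fun xs => nth 0 xs 0 * nth 0 xs 1).
Proof.
have H := c_prec (g := fun _ r ys => r + nth 0 ys 0) (c_zero 1)
  (c_ext (g := fun xs => nth 0 xs 1 + nth 0 (drop 2 xs) 0)
     (fun xs _ => congr1 (addn _) (esym (nth_drop2 xs)))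
     (c_add (c_var 3 1 erefl) (c_var 3 2 erefl))).
apply: c_ext H => xs /size2 -> /=.
by elim: (nth 0 xs 0) => //= n ->; rewrite mulSn addnC.
Qed.

Lemma c_mul a f g : rcomp a f -> rcomp a g -> rcomp a (fun xs => f xs * g xs).
Proof. exact: c_app2 c_mul0. Qed.

Lemma c_pred0 : rcomp 1 (fun xs => (nth 0 xs 0).-1).
Proof.
have H := c_prec (g := fun n _ _ => n) (c_zero 0) ((c_var 2 0 erefl)).
apply: c_ext H => [[|x [|]]] //= _. by case: x.
Qed.

Lemma c_pred a f : rcomp a f -> rcomp a (fun xs => (f xs).-1).
Proof. exact: c_app1 c_pred0. Qed.

Lemma c_subr0 : rcomp 2 (fun xs => nth 0 xs 1 - nth 0 xs 0).
Proof.
have H := c_prec (g := fun _ r _ => r.-1) ((c_var 1 0 erefl))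
  (c_pred ((c_var 3 1 erefl))).
apply: c_ext H => xs /size2 -> /=.
by elim: (nth 0 xs 0) => /= [|n ->]; rewrite ?subn0 // subnS.
Qed.

Lemma c_sub a f g : rcomp a f -> rcomp a g -> rcomp a (fun xs => f xs - g xs).
Proof.
move=> Hf Hg. exact: (c_app2 (f := fun x y => y - x) c_subr0 Hg Hf).
Qed.

Lemma c_exp0 : rcomp 1 (fun xs => 2 ^ nth 0 xs 0).
Proof.
have H := c_prec (g := fun _ r _ => r + r) (c_const 0 1)
  (c_add ((c_var 2 1 erefl)) ((c_var 2 1 erefl))).
apply: c_ext H => [[|x [|]]] //= _.
by elim: x => //= n ->; rewrite expnS mul2n addnn.
Qed.

Lemma c_exp a f : rcomp a f -> rcomp a (fun xs => 2 ^ f xs).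
Proof. exact: c_app1 c_exp0. Qed.

Lemma c_negb a (b : seq nat -> bool) : rcomp a (fun xs => b xs) -> rcomp a (fun xs => ~~ b xs).
Proof.
move=> H; apply: c_ext (c_sub (c_const a 1) H) => xs _. by case: (b xs).
Qed.

Lemma c_andb a (b1 b2 : seq nat -> bool) : rcomp a (fun xs => b1 xs) -> rcomp a (fun xs => b2 xs) ->
  rcomp a (fun xs => b1 xs && b2 xs).
Proof.
move=> H1 H2; apply: c_ext (c_mul H1 H2) => xs _. by case: (b1 xs); case: (b2 xs).
Qed.

Lemma c_orb a (b1 b2 : seq nat -> bool) : rcomp a (fun xs => b1 xs) -> rcomp a (fun xs => b2 xs) ->
  rcomp a (fun xs => b1 xs || b2 xs).
Proof.
move=> H1 H2; apply: c_ext (c_negb (c_andb (c_negb H1) (c_negb H2))) => xs _.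
by case: (b1 xs); case: (b2 xs).
Qed.

Lemma c_leq a f g : rcomp a f -> rcomp a g -> rcomp a (fun xs => f xs <= g xs).
Proof.
move=> Hf Hg; apply: c_ext (c_negb (c_app1 (f := fun x => 0 < x) _ (c_sub Hf Hg))) => [xs _|].
  by rewrite lt0n negbK subn_eq0.
apply: c_ext (c_sub (c_const 1 1) (c_sub (c_const 1 1) ((c_var 1 0 erefl)))) => xs _.
by case: (nth 0 xs 0).
Qed.

Lemma c_ltn a f g : rcomp a f -> rcomp a g -> rcomp a (fun xs => f xs < g xs).
Proof. move=> Hf Hg; exact: c_leq (c_succ Hf) Hg. Qed.

Lemma c_eqn a f g : rcomp a f -> rcomp a g -> rcomp a (fun xs => f xs == g xs).
Proof.
move=> Hf Hg; apply: c_ext (c_andb (c_leq Hf Hg) (c_leq Hg Hf)) => xs _.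
by rewrite eqn_leq.
Qed.

Lemma c_if a (b : seq nat -> bool) f g : rcomp a (fun xs => b xs) -> rcomp a f -> rcomp a g ->
  rcomp a (fun xs => if b xs then f xs else g xs).
Proof.
move=> Hb Hf Hg.
apply: c_ext (c_add (c_mul Hb Hf) (c_mul (c_negb Hb) Hg)) => xs _.
by case: (b xs) => /=; rewrite ?mul1n ?mul0n ?addn0.
Qed.

Lemma allc_map b (s : seq nat) F : (forall i, i \in s -> rcomp b (F i)) -> allc b (map F s).
Proof.
elim: s => //= i s IH H; split; first by apply: H; rewrite inE eqxx.
by apply: IH => j Hj; apply: H; rewrite inE Hj orbT.
Qed.

Lemma c_shift a f : rcomp a f -> rcomp a.+1 (fun xs => f (behead xs)).
Proof.
move=> Hf.
have H : allc a.+1 (map (fun i => fun xs : seq nat => nth 0 xs i.+1) (iota 0 a)).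
  by apply: allc_map => i; rewrite mem_iota add0n => /andP[_ Hi]; apply: c_var.
apply: c_ext (c_compL Hf _ H); last by rewrite size_map size_iota.
move=> xs Hs; congr f; rewrite -map_comp.
apply: (@eq_from_nth _ 0); first by rewrite size_map size_iota size_behead Hs.
move=> i; rewrite size_map size_iota => Hi.
by rewrite (nth_map 0) ?size_iota //= nth_iota // add0n nth_behead.
Qed.

Definition bmin (P : pred nat) b := find P (iota 0 b).

Lemma bmin_le (P : pred nat) b : bmin P b <= b.
Proof. by rewrite /bmin -{2}(size_iota 0 b) find_size. Qed.

Lemma bmin_P (P : pred nat) b : bmin P b < b -> P (bmin P b).
Proof.
move=> H; have := @nth_find _ 0 P (iota 0 b).
rewrite has_find size_iota => /(_ H). by rewrite nth_iota.
Qed.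

Lemma bmin_before (P : pred nat) b m : m < bmin P b -> ~~ P m.
Proof.
move=> H; have Hb : m < b := leq_trans H (bmin_le P b).
by have := @before_find _ 0 P (iota 0 b) m H; rewrite nth_iota // => ->.
Qed.

Lemma bminE (P : pred nat) b m : m <= b -> (m < b -> P m) -> (forall j, j < m -> ~~ P j) -> bmin P b = m.
Proof.
move=> Hm HP Hj; case: (ltngtP (bmin P b) m) => // H.
- have := Hj _ H; by rewrite bmin_P // (leq_trans H Hm).
- have Hmb : m < b := leq_trans H (bmin_le P b).
  by have := bmin_before H; rewrite HP.
Qed.

Lemma c_bmin a (P : nat -> seq nat -> bool) B :
  rcomp a.+1 (fun xs => P (nth 0 xs 0) (behead xs)) -> rcomp a B ->
  rcomp a (fun xs => bmin (fun m => P m xs) (B xs)).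
Proof.
move=> HP HB.
have [PQ HQ] := c_mul (c_negb HP) (c_sub (c_shift HB) (c_var a.+1 0 erefl)).
exists (rMin PQ) => xs Hs; constructor.
  have := HQ (bmin (fun m => P m xs) (B xs) :: xs); rewrite /= Hs => /(_ erefl).
  set m := bmin _ _; have := bmin_le (fun m => P m xs) (B xs).
  rewrite leq_eqVlt => /orP[/eqP E|H]; first by rewrite /m E subnn muln0.
  by rewrite /m (bmin_P H).
move=> m Hm; have Hmb : m < B xs := leq_trans Hm (bmin_le _ _).
have := HQ (m :: xs); rewrite /= Hs => /(_ erefl).
rewrite (negPf (bmin_before Hm)) /= mul1n.
case E: (B xs - m) => [|k]; last by move=> H; exists k.
by move: Hmb; rewrite -subn_gt0 E.
Qed.

Fixpoint loop (n : nat) (x : nat) (st : nat -> nat -> nat) :=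
  if n is n'.+1 then st n' (loop n' x st) else x.

Lemma c_loop a N I (st : nat -> nat -> seq nat -> nat) :
  rcomp a N -> rcomp a I ->
  rcomp a.+2 (fun xs => st (nth 0 xs 0) (nth 0 xs 1) (drop 2 xs)) ->
  rcomp a (fun xs => loop (N xs) (I xs) (fun i r => st i r xs)).
Proof.
move=> HN HI Hst.
have Hp := c_prec HI Hst.
have H : allc a (N :: map (fun i => fun xs : seq nat => nth 0 xs i) (iota 0 a)).
  split => //; by apply: allc_map => i; rewrite mem_iota add0n => /andP[_ Hi]; apply: c_var.
apply: c_ext (c_compL Hp _ H); last by rewrite /= size_map size_iota.
move=> xs Hs /=.
have -> : [seq g xs | g <- [seq (fun xs0 : seq nat => nth 0 xs0 i) | i <- iota 0 a]] = xs.
  rewrite -map_comp; apply: (@eq_from_nth _ 0); first by rewrite size_map size_iota Hs.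
  move=> i; rewrite size_map size_iota => Hi.
  by rewrite (nth_map 0) ?size_iota //= nth_iota.
by elim: (N xs) => //= n ->.
Qed.


Lemma nthb (ys : seq nat) i : nth 0 (behead ys) i = nth 0 ys i.+1.
Proof. by rewrite nth_behead. Qed.

Definition tri n := loop n 0 (fun i r => r + i.+1).

Lemma c_tri a f : rcomp a f -> rcomp a (fun xs => tri (f xs)).
Proof.
move=> Hf; apply: c_app1 Hf.
exact: (c_loop (st := fun i r _ => r + i.+1) (c_var 1 0 erefl) (c_const 1 0)
   (c_add (c_var 3 1 erefl) (c_succ (c_var 3 0 erefl)))).
Qed.

Lemma tri2 n : (tri n).*2 = n * n.+1.
Proof.
elim: n => //= n IH; rewrite /tri /= -/(tri n) doubleD IH.
rewrite -!muln2. ring.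
Qed.

Lemma triE n : tri n = n * n.+1 %/ 2.
Proof. by rewrite -tri2 -muln2 mulnK. Qed.

Lemma cpairE a b : cpair a b = tri (a + b) + b.
Proof. by rewrite /cpair triE. Qed.

Definition ut z := (bmin (fun t => z.*2 < t * t.+1) z.+2).-1.
Definition usnd z := z - tri (ut z).
Definition ufst z := ut z - usnd z.

Lemma tri_ge n : n <= tri n.
Proof. by elim: n => //= n IH; rewrite /tri /= -/(tri n) addnS ltnS leq_addl. Qed.

Lemma ut_cpair a b : ut (cpair a b) = a + b.
Proof.
rewrite /ut; set s := a + b; set z := cpair a b.
suff -> : bmin (fun t => z.*2 < t * t.+1) z.+2 = s.+1 by [].
have T2 := tri2 s; have T1 := tri_ge s.
have Hb : b <= s by rewrite leq_addl.
apply: bminE.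
- rewrite /z cpairE -/s. lia.
- move=> _; rewrite /z cpairE -/s doubleD T2 -!muln2. nia.
- move=> j Hj; rewrite -leqNgt /z cpairE doubleD T2 -!muln2.
  have : j * j.+1 <= s * s.+1 by apply: leq_mul; lia.
  lia.
Qed.

Lemma usnd_cpair a b : usnd (cpair a b) = b.
Proof. by rewrite /usnd ut_cpair cpairE addKn. Qed.

Lemma ufst_cpair a b : ufst (cpair a b) = a.
Proof. by rewrite /ufst usnd_cpair ut_cpair addnK. Qed.

Lemma c_double a f : rcomp a f -> rcomp a (fun xs => (f xs).*2).
Proof. move=> H; apply: c_ext (c_add H H) => xs _; by rewrite addnn. Qed.

Lemma c_ut0 : rcomp 1 (fun xs => ut (nth 0 xs 0)).
Proof.
apply: c_pred.
apply: (c_bmin (P := fun t xs => (nth 0 xs 0).*2 < t * t.+1)); last first.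
  exact: c_succ (c_succ (c_var 1 0 erefl)).
apply: c_ext (c_ltn (c_double (c_var 2 1 erefl))
   (c_mul (c_var 2 0 erefl) (c_succ (c_var 2 0 erefl)))) => xs _.
by rewrite nthb.
Qed.

Lemma c_ut a f : rcomp a f -> rcomp a (fun xs => ut (f xs)).
Proof. exact: c_app1 c_ut0. Qed.

Lemma c_usnd a f : rcomp a f -> rcomp a (fun xs => usnd (f xs)).
Proof. move=> H; exact: c_sub H (c_tri (c_ut H)). Qed.

Lemma c_ufst a f : rcomp a f -> rcomp a (fun xs => ufst (f xs)).
Proof. move=> H; exact: c_sub (c_ut H) (c_usnd H). Qed.

Lemma c_cpair a f g : rcomp a f -> rcomp a g -> rcomp a (fun xs => cpair (f xs) (g xs)).
Proof.
move=> Hf Hg; apply: c_ext (c_add (c_tri (c_add Hf Hg)) Hg) => xs _.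
by rewrite cpairE.
Qed.

Definition tl x := usnd x.-1.
Definition hd x := ufst x.-1.
Definition iterc l c := loop l c (fun _ r => tl r).
Definition nthc j c := hd (iterc j c).
Definition lenc c := bmin (fun l => iterc l c == 0) c.+1.
Definition memc v c := bmin (fun j => nthc j c == v) (lenc c) < lenc c.

Lemma tl_cons x s : tl (code_seq (x :: s)) = code_seq s.
Proof. by rewrite /tl /= usnd_cpair. Qed.

Lemma iterc_code l s : iterc l (code_seq s) = code_seq (drop l s).
Proof.
elim: l => [|l IH]; first by rewrite drop0.
rewrite /iterc /= -/(iterc l _) IH.
case: (ltnP l (size s)) => H.
  by rewrite (drop_nth 0 H) tl_cons.
by rewrite !drop_oversize // ltnW.
Qed.

Lemma nthc_code j s : j < size s -> nthc j (code_seq s) = nth 0 s j.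
Proof.
by move=> H; rewrite /nthc iterc_code (drop_nth 0 H) /hd /= ufst_cpair.
Qed.

Lemma code_size s : size s <= code_seq s.
Proof.
elim: s => //= x s IH; rewrite ltnS (leq_trans IH) // cpairE; lia.
Qed.

Lemma code0 s : (code_seq s == 0) = (s == [::]).
Proof. by case: s. Qed.

Lemma lenc_code s : lenc (code_seq s) = size s.
Proof.
apply: bminE; first by apply: leq_trans (code_size s) _.
  by move=> _; rewrite iterc_code code0 drop_oversize.
by move=> j Hj; rewrite iterc_code code0 -size_eq0 size_drop subn_eq0 -ltnNge.
Qed.

Lemma memc_code (v : nat) s : memc v (code_seq s) = (v \in s).
Proof.
rewrite /memc lenc_code.
apply/idP/idP.
  move=> H; have := bmin_P H; rewrite nthc_code // => /eqP <-; exact: mem_nth.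
move=> Hv.
have Hi : index v s < size s by rewrite index_mem.
apply: leq_ltn_trans (Hi) .
rewrite leqNgt; apply/negP => /bmin_before.
rewrite nthc_code // => /negP; apply; apply/eqP; exact: nth_index.
Qed.

Lemma c_tl a f : rcomp a f -> rcomp a (fun xs => tl (f xs)).
Proof. move=> H; exact: c_usnd (c_pred H). Qed.
Lemma c_hd a f : rcomp a f -> rcomp a (fun xs => hd (f xs)).
Proof. move=> H; exact: c_ufst (c_pred H). Qed.

Lemma c_iterc a f g : rcomp a f -> rcomp a g -> rcomp a (fun xs => iterc (f xs) (g xs)).
Proof.
move=> Hf Hg.
exact: (c_loop (st := fun _ r _ => tl r) Hf Hg (c_tl (c_var a.+2 1 erefl))).
Qed.

Lemma c_nthc a f g : rcomp a f -> rcomp a g -> rcomp a (fun xs => nthc (f xs) (g xs)).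
Proof. move=> Hf Hg; exact: c_hd (c_iterc Hf Hg). Qed.

Lemma c_lenc a f : rcomp a f -> rcomp a (fun xs => lenc (f xs)).
Proof.
move=> Hf; apply: (c_bmin (P := fun l xs => iterc l (f xs) == 0)); last exact: c_succ Hf.
exact: c_eqn (c_iterc (c_var a.+1 0 erefl) (c_shift Hf)) (c_const a.+1 0).
Qed.

Lemma c_memc a f g : rcomp a f -> rcomp a g -> rcomp a (fun xs => memc (f xs) (g xs)).
Proof.
move=> Hf Hg; apply: c_ltn (c_lenc Hg).
apply: (c_bmin (P := fun j xs => nthc j (g xs) == f xs)); last exact: c_lenc Hg.
exact: c_eqn (c_nthc (c_var a.+1 0 erefl) (c_shift Hg)) (c_shift Hf).
Qed.


Fixpoint idx (w : seq bool) : nat := if w is b :: w' then b + (idx w').*2 else 0.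
Fixpoint wi k v : seq bool := if k is k'.+1 then odd v :: wi k' v./2 else [::].

Lemma size_wi k v : size (wi k v) = k.
Proof. by elim: k v => //= k IH v; rewrite IH. Qed.

Lemma idx_lt w : idx w < 2 ^ size w.
Proof.
elim: w => //= b w IH; rewrite expnS mul2n.
case: b => /=; last by rewrite add0n ltn_double.
by rewrite add1n ltn_Sdouble.
Qed.

Lemma wi_idx w : wi (size w) (idx w) = w.
Proof.
elim: w => //= b w IH; congr cons.
  by rewrite oddD odd_double addbF; case: b.
by rewrite -divn2 -muln2 divnDMl // divn_small ?add0n //; case: b.
Qed.

Lemma mod2m v m : 0 < m -> v %% (2 * m) = odd v + (v./2 %% m).*2.
Proof.
move=> Hm.
have E0 := odd_double_half v.
have E2 := divn_eq v./2 m.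
have Hr : v./2 %% m < m by rewrite ltn_mod.
set q := v./2 %/ m in E2; set r := v./2 %% m in E2 Hr *.
have E1 : v = q * (2 * m) + (odd v + r.*2).
  rewrite -{1}E0 {1}E2 -!muln2. ring.
rewrite {1}E1 modnMDl modn_small //.
case: (odd v); rewrite -muln2; lia.
Qed.

Lemma idx_wi k v : idx (wi k v) = v %% 2 ^ k.
Proof.
elim: k v => [|k IH] v /=; first by rewrite modn1.
by rewrite IH expnS mod2m // expn_gt0.
Qed.

Lemma idx_inj w1 w2 : size w1 = size w2 -> idx w1 = idx w2 -> w1 = w2.
Proof. by move=> Hs Hi; rewrite -(wi_idx w1) -(wi_idx w2) Hs Hi. Qed.

Lemma wcode_idx w : (wcode w).+1 = 2 ^ size w + idx w.
Proof.
elim: w => //= b w IH; rewrite expnS.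
have : wcode w = 2 ^ size w + idx w - 1 by rewrite -IH subn1.
move=> ->; have := expn_gt0 2 (size w); rewrite -!muln2; case: b => /=; lia.
Qed.

Lemma idx_rcons w b : idx (rcons w b) = idx w + b * 2 ^ size w.
Proof.
elim: w => [|c w IH] /=; first by rewrite addn0 muln1.
rewrite IH expnS -!muln2; ring.
Qed.

Lemma bprefixS x k : bprefix x k.+1 = rcons (bprefix x k) (x k).
Proof. by rewrite /bprefix mkseqS. Qed.

Lemma size_bprefix x k : size (bprefix x k) = k.
Proof. by rewrite size_mkseq. Qed.

Lemma idx_bprefixS x k : idx (bprefix x k.+1) = idx (bprefix x k) + x k * 2 ^ k.
Proof. by rewrite bprefixS idx_rcons size_bprefix. Qed.

Lemma idx_bprefix_mod x j k : j <= k -> idx (bprefix x k) %% 2 ^ j = idx (bprefix x j).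
Proof.
move=> Hjk; elim: k Hjk => [|k IH].
  rewrite leqn0 => /eqP ->; by rewrite expn0 modn1.
rewrite leq_eqVlt => /orP[/eqP ->|Hj].
  by have := idx_lt (bprefix x k.+1); rewrite size_bprefix => H; rewrite modn_small.
rewrite idx_bprefixS -modnDm IH // (_ : x k * 2 ^ k %% 2 ^ j = 0) ?addn0.
  have := idx_lt (bprefix x j); rewrite size_bprefix => H.
  by rewrite modn_small.
by apply/eqP; rewrite -/(dvdn _ _) dvdn_mull // dvdn_exp2l.
Qed.

Definition dl c := bmin (fun l => c.+1 < 2 ^ l.+1) c.+1.
Definition dv c := c.+1 - 2 ^ dl c.
Definition decode c := wi (dl c) (dv c).

Lemma dl_wcode w : dl (wcode w) = size w.
Proof.
rewrite /dl wcode_idx; have Hi := idx_lt w.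
apply: bminE.
- have := ltn_expl (size w) (isT : 1 < 2); lia.
- by move=> _; rewrite expnS mul2n -addnn ltn_add2l.
- move=> j Hj; rewrite -leqNgt (leq_trans _ (leq_addr _ _)) // leq_exp2l //.
Qed.

Lemma decodeK w : decode (wcode w) = w.
Proof.
by rewrite /decode /dv dl_wcode wcode_idx addKn -{3}(wi_idx w).
Qed.

Lemma mem_words k w : (w \in words k) = (size w == k).
Proof.
elim: k w => [|k IH] [|b w] //=; rewrite cats0 mem_cat.
  by apply/negP => /orP[] /mapP [].
rewrite eqSS -IH.
have inj c : injective (cons c) by move=> u v [].
have N1 : (true :: w \in [seq false :: w0 | w0 <- words k]) = false.
  by apply/mapP => [[w' _ //]].
have N2 : (false :: w \in [seq true :: w0 | w0 <- words k]) = false.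
  by apply/mapP => [[w' _ //]].
by case: b; rewrite ?N1 ?N2 ?orbF /= (mem_map (inj _ _)).
Qed.

Lemma uniq_words k : uniq (words k).
Proof.
have inj c : injective (@cons bool c) by move=> u v [].
elim: k => //= k IH; rewrite cats0 cat_uniq !map_inj_uniq // IH andbT /=.
apply/hasPn => u /mapP [w _ ->]; apply/mapP => [[w' _ //]].
Qed.

Lemma count_sub (s S : seq nat) : uniq s -> uniq S -> {subset S <= s} ->
  count (mem S) s = size S.
Proof.
move=> Us US Hsub; rewrite -size_filter.
apply: perm_size; apply: uniq_perm => //; first exact: filter_uniq.
move=> v; rewrite mem_filter; apply/andP/idP => [[]//|H]; split => //.
exact: Hsub.
Qed.

Lemma count_idx k (S : seq nat) : uniq S -> all (fun v => v < 2 ^ k) S ->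
  count (fun w => idx w \in S) (words k) = size S.
Proof.
move=> US HS.
rewrite -(count_sub (s := map idx (words k))) //; first by rewrite count_map.
  rewrite map_inj_in_uniq ?uniq_words // => w1 w2.
  by rewrite !mem_words => /eqP H1 /eqP H2; apply: idx_inj; rewrite H1 H2.
move=> v Hv; have := allP HS v Hv => Hk.
apply/mapP; exists (wi k v); first by rewrite mem_words size_wi.
by rewrite idx_wi modn_small.
Qed.

Section LevelTree.
Variables (L : nat) (Sf : nat -> seq nat).

Definition Tset (w : seq bool) := (size w < L) || (idx w \in Sf (size w)).
Definition qname (m : nat) : nat := Tset (decode m).

Lemma inT_qname w : inT qname w = Tset w.
Proof. by rewrite /inT /qname decodeK; case: (Tset w). Qed.

Lemma sharp_tree m :
  m <= 2 ^ L -> (forall k, m <= 2 ^ k -> L <= k) ->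
  (forall k, L <= k -> [/\ uniq (Sf k), size (Sf k) = m & all (fun v => v < 2 ^ k) (Sf k)]) ->
  (forall k v, L <= k -> v \in Sf k.+1 -> v %% 2 ^ k \in Sf k) ->
  (exists d, forall k v, d <= k -> L <= k -> v \in Sf k ->
      (v \in Sf k.+1) != (v + 2 ^ k \in Sf k.+1)) ->
  is_tree qname /\ tree_sharp m qname.
Proof.
move=> hL1 hL2 h1 h2 [d h3]; split; first split.
- by move=> i; rewrite /qname; case: (Tset _).
- move=> w b; rewrite !inT_qname /Tset size_rcons.
  case: (ltnP (size w) L) => //= HL.
  rewrite ltnNge (leq_trans HL) //= idx_rcons => H.
  have := h2 _ _ HL H.
  by rewrite addnC modnMDl modn_small // idx_lt.
split.
- move=> k Hk; have HLk := hL2 _ Hk; have [U Sz A] := h1 _ HLk.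
  rewrite -Sz -(count_idx U A).
  apply: eq_in_count => w; rewrite mem_words => /eqP Hw.
  by rewrite inT_qname /Tset Hw ltnNge HLk.
- exists (maxn d L) => w; rewrite geq_max => /andP[Hd HL].
  rewrite !inT_qname /Tset !size_rcons ltnNge HL /= => Hw.
  rewrite !ltnNge (leq_trans HL) //= !idx_rcons /= mul0n mul1n addn0.
  exact: h3.
Qed.
End LevelTree.


Lemma modm2 v m : 0 < m -> v %% (m * 2) = v %% m + odd (v %/ m) * m.
Proof.
move=> Hm.
have E0 := divn_eq v m.
have E1 := odd_double_half (v %/ m).
have Hr : v %% m < m by rewrite ltn_mod.
set q := v %/ m in E0 E1; set r := v %% m in E0 Hr *.
have E2 : v = q./2 * (m * 2) + (r + odd q * m).
  rewrite {1}E0 -{1}E1 -!muln2. ring.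
rewrite {1}E2 modnMDl modn_small //.
case: (odd q); lia.
Qed.

Section Neg.
Variable n : nat.
Definition LL := up_log 2 n.+1.
Lemma hL1 : n.+1 <= 2 ^ LL. Proof. exact: up_logP. Qed.
Lemma hL2 k : n.+1 <= 2 ^ k -> LL <= k. Proof. exact: up_log_min. Qed.

Variable y : nat -> nat -> bool.
Definition zz i j := if j < LL then odd (i %/ 2 ^ j) else (if j - LL <= n then ~~ y (j - LL) j else false).
Definition Sneg k := map (fun i => idx (bprefix (zz i) k)) (iota 0 n.+1).

Lemma zz_low i k : k <= LL -> idx (bprefix (zz i) k) = i %% 2 ^ k.
Proof.
elim: k => [|k IH] Hk; first by rewrite expn0 modn1.
by rewrite idx_bprefixS IH ?(ltnW Hk) // /zz Hk expnSr modm2 // expn_gt0.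
Qed.

Lemma zz_mod i k : i <= n -> LL <= k -> idx (bprefix (zz i) k) %% 2 ^ LL = i.
Proof.
move=> Hi Hk; rewrite idx_bprefix_mod // zz_low // modn_small //.
exact: leq_trans hL1.
Qed.

Lemma memSneg k u : (u \in Sneg k) = has (fun i => u == idx (bprefix (zz i) k)) (iota 0 n.+1).
Proof.
apply/mapP/hasP => [[i Hi ->]|[i Hi /eqP ->]]; by exists i.
Qed.

Lemma Sneg_step i k (b : bool) : i <= n -> LL <= k ->
  (idx (bprefix (zz i) k) + b * 2 ^ k \in Sneg k.+1) = (zz i k == b).
Proof.
move=> Hi Hk; rewrite memSneg; apply/hasP/eqP => [[i' Hi' /eqP E]|E].
  rewrite mem_iota add0n ltnS in Hi'.
  move: E; rewrite idx_bprefixS.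
  have A1 := idx_lt (bprefix (zz i) k); have A2 := idx_lt (bprefix (zz i') k).
  rewrite !size_bprefix in A1 A2.
  set a := idx _ in A1 *; set a' := idx _ in A2 *.
  move=> E.
  have [Ea Eb] : a = a' /\ b = zz i' k.
    by move: E A1 A2; case: b; case: (zz i' k) => /=; lia.
  have Ei : i = i'.
    by rewrite -(zz_mod Hi Hk) -(zz_mod Hi' Hk) -/a -/a' Ea.
  by rewrite Eb Ei.
exists i; first by rewrite mem_iota add0n ltnS.
by rewrite idx_bprefixS E.
Qed.

Lemma neg_tree : is_tree (qname LL Sneg) /\ tree_sharp n.+1 (qname LL Sneg).
Proof.
apply: sharp_tree; [exact: hL1 | exact: hL2 | | | ].
- move=> k Hk; split.
  + rewrite map_inj_in_uniq ?iota_uniq // => i1 i2.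
    rewrite !mem_iota !add0n !ltnS => H1 H2 E.
    by rewrite -(zz_mod H1 Hk) -(zz_mod H2 Hk) E.
  + by rewrite size_map size_iota.
  + apply/allP => u /mapP [i _ ->]; have := idx_lt (bprefix (zz i) k).
    by rewrite size_bprefix.
- move=> k u Hk /mapP [i Hi ->]; rewrite idx_bprefix_mod //.
  by apply/mapP; exists i.
- exists LL => k u _ Hk /mapP [i Hi ->].
  rewrite mem_iota add0n ltnS in Hi.
  have := Sneg_step false Hi Hk; rewrite mul0n addn0 => ->.
  have := Sneg_step true Hi Hk; rewrite mul1n => ->.
  by case: (zz i k).
Qed.

Lemma neg_path0 : forall k, inT (qname LL Sneg) (bprefix (zz 0) k).
Proof.
move=> k; rewrite inT_qname /Tset size_bprefix.
case: ltnP => //= Hk; apply/mapP; exists 0 => //.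
Qed.

Lemma neg_avoid j x : j <= n -> x =1 y j ->
  ~ (forall k, inT (qname LL Sneg) (bprefix x k)).
Proof.
move=> Hj Ex H.
have := H (LL + j).+1; rewrite inT_qname /Tset size_bprefix ltnNge.
rewrite (_ : LL <= (LL + j).+1); last lia.
move=> /mapP [i Hi E].
have E' : bprefix x (LL + j).+1 = bprefix (zz i) (LL + j).+1.
  by apply: idx_inj E; rewrite !size_bprefix.
have := congr1 (fun s => nth false s (LL + j)) E'.
rewrite /bprefix !nth_mkseq // /zz ltnNge leq_addr /= addKn Hj /= Ex.
by case: (y j (LL + j)).
Qed.
End Neg.

Section NegMain.
Variable n : nat.

Definition pickG (q : baire) : nat :=
  match excluded_middle_informative (exists i, i <= n /\ forall k, q k <> i.+1) with
  | left e => proj1_sig (constructive_indefinite_description _ e)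
  | right _ => 0 end.

Lemma pickG_le q : pickG q <= n.
Proof.
rewrite /pickG; case: excluded_middle_informative => // e.
by case: (constructive_indefinite_description _ e) => /= i [].
Qed.

Lemma pickG_spec q : (exists i, i <= n /\ forall k, q k <> i.+1) ->
  forall k, q k <> (pickG q).+1.
Proof.
rewrite /pickG => e0; case: excluded_middle_informative => // e.
by case: (constructive_indefinite_description _ e) => /= i [].
Qed.

Lemma pickG_real : realizes (C_fin n) (fun _ => True) (fun q _ => pickG q).
Proof.
move=> p A HA /set0Pn [i Hi]; split => //.
have Hle : pickG p < n.+1 by rewrite ltnS pickG_le.
exists (Ordinal Hle); split => //=.
apply/HA => /=; apply: pickG_spec.
by exists i; split; [rewrite -ltnS | apply/HA].
Qed.

Theorem neg_part : ~ sW_le (C_sharp n.+1) (C_fin n).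
Proof.
move=> [K [H HH]].
pose yv (j : nat) : nat -> bool :=
  match excluded_middle_informative (exists r, t2comp K (fun _ => j) r) with
  | left e => let r := proj1_sig (constructive_indefinite_description _ e) in
              fun k => r k == 1
  | right _ => fun _ => false end.
have [Htree Hsharp] := neg_tree n yv.
set q0 := qname (LL n) (Sneg n yv).
set A0 := fun x : nat -> bool => forall k, inT q0 (bprefix x k).
have Hd : delta (closed_sharp n.+1) q0 A0 by split.
have Hm : mdom (C_sharp n.+1) A0 by exists (zz n yv 0); exact: neg_path0.
have [q [_ [_ [r [Hr [x [Hx HA]]]]]]] := HH _ _ pickG_real q0 A0 Hd Hm.
set j := pickG q in Hr.
have Ey : x =1 yv j.
  move=> k; rewrite /yv; case: excluded_middle_informative => [e|[]]; last by exists r.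
  case: (constructive_indefinite_description _ e) => /= r' Hr'.
  by rewrite (t2comp_det Hr' Hr) Hx; case: (x k).
exact: (neg_avoid (pickG_le q) Ey HA).
Qed.
End NegMain.


Lemma bmin_none (P : pred nat) b : (forall m, m < b -> ~~ P m) -> bmin P b = b.
Proof. move=> H; apply: bminE => [//| |m Hm]; [by rewrite ltnn | exact: H]. Qed.

Lemma bmin_wit (P : pred nat) b m : P m -> m < b -> bmin P b <= m.
Proof.
move=> Hm Hb; rewrite leqNgt; apply/negP => /bmin_before; by rewrite Hm.
Qed.

Lemma eq_bmin (P Q : pred nat) b : P =1 Q -> bmin P b = bmin Q b.
Proof. by move=> E; rewrite /bmin (eq_find E). Qed.

Section Spec.
Variables (n : nat) (R : nat -> nat -> bool).

Definition bad k v := R k (v %% 2 ^ LL n).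
Definition dd k (S : seq nat) := bmin (fun v => (v \in S) && bad k v) (2 ^ k).
Definition gg k (S : seq nat) := bmin (fun v => (v \in S) && ~~ bad k v) (2 ^ k).
Definition stepS k (S : seq nat) :=
  if dd k S < 2 ^ k then (gg k S + 2 ^ k) :: rem (dd k S) S else S.
Fixpoint cur t := if t is t'.+1 then stepS (LL n + t') (cur t') else iota 0 n.+1.

Lemma cur0 : cur 0 = iota 0 n.+1. Proof. by []. Qed.
Lemma curS t : cur t.+1 = stepS (LL n + t) (cur t). Proof. by []. Qed.

Lemma LLn : n < 2 ^ LL n. Proof. exact: hL1. Qed.

Lemma dd_in k S : dd k S < 2 ^ k -> (dd k S \in S) && bad k (dd k S).
Proof. exact: bmin_P. Qed.

Variable i0 : nat.
Hypothesis Hi0 : i0 <= n.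
Hypothesis HR0 : forall k, R k i0 = false.

Lemma i0_good k : bad k i0 = false.
Proof. by rewrite /bad modn_small ?HR0 // (leq_ltn_trans Hi0 LLn). Qed.

Lemma mem_rem_neq (x y : nat) s : x != y -> x \in s -> x \in rem y s.
Proof.
move=> Hxy; elim: s => //= z s IH; rewrite inE => /orP[/eqP <-|H].
  by rewrite (negPf Hxy) inE eqxx.
case: ifP => _ //; by rewrite inE IH ?orbT.
Qed.

Lemma cur_i0 t : i0 \in cur t.
Proof.
elim: t => [|t IH]; first by rewrite cur0 mem_iota.
rewrite curS /stepS; case: ifP => Hd //.
rewrite inE; apply/orP; right.
have /andP[Hin Hb] := dd_in Hd.
apply: mem_rem_neq IH; apply/eqP => E; by rewrite -E i0_good in Hb.
Qed.

Lemma gg_lt t : gg (LL n + t) (cur t) < 2 ^ (LL n + t).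
Proof.
have Hlt : i0 < 2 ^ (LL n + t).
  apply: leq_ltn_trans Hi0 (leq_trans LLn _); by rewrite leq_exp2l // leq_addr.
apply: leq_ltn_trans (bmin_wit _ Hlt) Hlt.
by rewrite cur_i0 i0_good.
Qed.

Lemma cur_inv t : [/\ uniq (cur t), size (cur t) = n.+1 &
   all (fun v => v < 2 ^ (LL n + t)) (cur t)].
Proof.
elim: t => [|t [U S A]].
  rewrite cur0 iota_uniq size_iota addn0; split => //.
  apply/allP => v; rewrite mem_iota add0n ltnS => H; exact: leq_ltn_trans H LLn.
rewrite curS /stepS; case: ifP => Hd.
  have /andP[Hin Hb] := dd_in Hd.
  have Hg := gg_lt t.
  have notin : gg (LL n + t) (cur t) + 2 ^ (LL n + t) \notin rem (dd (LL n + t) (cur t)) (cur t).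
    apply/negP => /mem_rem H; have := allP A _ H; lia.
  split.
  - by rewrite /= notin rem_uniq.
  - by rewrite /= size_rem // S.
  - rewrite /= addnS expnS; apply/andP; split; first lia.
    apply/allP => v /mem_rem H; have := allP A _ H; lia.
split => //; apply/allP => v H; have := allP A _ H; rewrite addnS expnS; lia.
Qed.

Lemma cur_lt t v : v \in cur t -> v < 2 ^ (LL n + t).
Proof. by have [_ _ A] := cur_inv t; move/(allP A). Qed.

Lemma cur_lab t v : v \in cur t -> v %% 2 ^ LL n <= n.
Proof.
elim: t v => [|t IH] v.
  by rewrite cur0 mem_iota add0n ltnS => H; rewrite modn_small // (leq_ltn_trans H LLn).
rewrite curS /stepS; case: ifP => Hd; last exact: IH.
rewrite inE => /orP[/eqP ->|/mem_rem H]; last exact: IH.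
rewrite expnD mulnC addnC modnMDl; apply: IH.
by have /andP[] := bmin_P (gg_lt t).
Qed.

Lemma cur_prefix t v : v \in cur t.+1 -> v %% 2 ^ (LL n + t) \in cur t.
Proof.
rewrite curS /stepS; case: ifP => Hd.
  rewrite inE => /orP[/eqP ->|/mem_rem H].
    rewrite modnDr modn_small ?gg_lt //.
    by have /andP[] := bmin_P (gg_lt t).
  by rewrite modn_small // cur_lt.
by move=> H; rewrite modn_small // cur_lt.
Qed.
Variables (Rinf : nat -> bool) (k1 : nat).
Hypothesis HRinf : forall k i, k1 <= k -> i <= n -> R k i = Rinf i.

Definition bc t := count (fun v => Rinf (v %% 2 ^ LL n)) (cur t).

Lemma bad_inf t v : k1 <= LL n + t -> v \in cur t -> bad (LL n + t) v = Rinf (v %% 2 ^ LL n).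
Proof. by move=> Hk Hv; rewrite /bad HRinf // (cur_lab Hv). Qed.

Lemma bc_step t : k1 <= LL n + t -> bc t.+1 = (bc t).-1 /\ (bc t = 0 -> cur t.+1 = cur t).
Proof.
move=> Hk; rewrite /bc curS /stepS; case: ifP => Hd.
  have /andP[Hin Hb] := dd_in Hd.
  have /andP[Hgin Hgb] := bmin_P (gg_lt t).
  rewrite (bad_inf Hk Hin) in Hb; rewrite (bad_inf Hk Hgin) in Hgb.
  have Hpos : 0 < count (fun v => Rinf (v %% 2 ^ LL n)) (cur t).
    by rewrite -has_count; apply/hasP; exists (dd (LL n + t) (cur t)).
  split; last by move=> E; rewrite E in Hpos.
  rewrite /= count_rem Hin Hb /= subn1.
  rewrite (_ : gg (LL n + t) (cur t) + 2 ^ (LL n + t) = 2 ^ t * 2 ^ LL n + gg (LL n + t) (cur t)); last by rewrite expnD mulnC addnC.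
  by rewrite modnMDl (negPf Hgb).
split => //.
case E: (count _ _) => [//|c].
have : has (fun v => Rinf (v %% 2 ^ LL n)) (cur t) by rewrite has_count E.
move=> /hasP [v Hv Hr].
have := bmin_wit (P := fun v => (v \in cur t) && bad (LL n + t) v) (b := 2 ^ (LL n + t)) (m := v).
rewrite Hv (bad_inf Hk Hv) Hr cur_lt // => /(_ isT isT) H.
by rewrite /dd (leq_ltn_trans H (cur_lt Hv)) in Hd.
Qed.

Lemma bc_bound m : bc (k1 + m) <= n.+1 - m.
Proof.
elim: m => [|m IH].
  have [_ S _] := cur_inv k1.
  by rewrite addn0 subn0 /bc -S count_size.
have Hk : k1 <= LL n + (k1 + m) by lia.
have [E _] := bc_step Hk; rewrite addnS E; lia.
Qed.

Lemma eventual : exists t0, forall t, t0 <= t ->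
  cur t.+1 = cur t /\ forall v, v \in cur t -> ~~ Rinf (v %% 2 ^ LL n).
Proof.
exists (k1 + n.+1) => t Ht.
have Hb : bc t = 0.
  have := bc_bound (t - k1); rewrite subnKC; last lia.
  move=> H; apply/eqP; rewrite -leqn0 (leq_trans H) //; lia.
have Hk : k1 <= LL n + t by lia.
split; first by have [_ ->] := bc_step Hk.
move=> v Hv; apply/negP => Hr.
have : 0 < bc t by rewrite /bc -has_count; apply/hasP; exists v.
by rewrite Hb.
Qed.
End Spec.


Lemma cur_ext n R1 R2 t : (forall k i, k < LL n + t -> R1 k i = R2 k i) ->
  cur n R1 t = cur n R2 t.
Proof.
elim: t => [//|t IH] H.
rewrite !curS IH => [|k i Hk]; last by apply: H; lia.
have E : forall v, bad n R1 (LL n + t) v = bad n R2 (LL n + t) v.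
  by move=> v; rewrite /bad H //; lia.
rewrite /stepS /dd /gg.
rewrite (eq_bmin _ (Q := fun v => (v \in cur n R2 t) && bad n R2 (LL n + t) v)); last by move=> v; rewrite E.
rewrite (eq_bmin _ (P := fun v => (v \in cur n R2 t) && ~~ bad n R1 (LL n + t) v)
  (Q := fun v => (v \in cur n R2 t) && ~~ bad n R2 (LL n + t) v)) //.
by move=> v; rewrite E.
Qed.

Definition modc v m := v - m * bmin (fun q => v < q.+1 * m) v.+1.

Lemma modcE v m : 0 < m -> modc v m = v %% m.
Proof.
move=> Hm; rewrite /modc (_ : bmin _ _ = v %/ m).
  rewrite {1}(divn_eq v m); nia.
apply: bminE; first by apply: leq_trans (leq_div v m) _.
  by move=> _; rewrite ltn_ceil.
move=> j Hj; rewrite -leqNgt.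
by apply: leq_trans (leq_trunc_div v m); rewrite leq_mul2r Hj orbT.
Qed.

Lemma c_modc a f g : rcomp a f -> rcomp a g -> rcomp a (fun xs => modc (f xs) (g xs)).
Proof.
move=> Hf Hg; apply: c_sub (Hf) (c_mul (Hg) _).
apply: (c_bmin (P := fun q xs => f xs < q.+1 * g xs)); last exact: c_succ Hf.
exact: c_ltn (c_shift Hf) (c_mul (c_succ (c_var a.+1 0 erefl)) (c_shift Hg)).
Qed.

Section Prog.
Variable n : nat.

Definition Rc k i s := bmin (fun j => nthc j s == i.+1) k < k.
Definition inSc v c := ((v <= n) || memc v (ufst c)) && ~~ memc v (usnd c).
Definition badc k v s := Rc k (modc v (2 ^ LL n)) s.
Definition ddc k c s := bmin (fun v => inSc v c && badc k v s) (2 ^ k).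
Definition ggc k c s := bmin (fun v => inSc v c && ~~ badc k v s) (2 ^ k).
Definition stepc k c s :=
  if ddc k c s < 2 ^ k then
    cpair (cpair (ggc k c s + 2 ^ k) (ufst c)).+1 (cpair (ddc k c s) (usnd c)).+1
  else c.
Definition statec t s := loop t (cpair 0 0) (fun i r => stepc (LL n + i) r s).
Definition Hf z :=
  if iterc (dl (ufst z)) (usnd z) == 0 then 0 else
  ((dl (ufst z) < LL n) || inSc (dv (ufst z)) (statec (dl (ufst z) - LL n) (usnd z))).+1.

Lemma c_Rc a k i s : rcomp a k -> rcomp a i -> rcomp a s -> rcomp a (fun xs => Rc (k xs) (i xs) (s xs)).
Proof.
move=> Hk Hi Hs; apply: c_ltn (Hk); apply: (c_bmin (P := fun j xs => nthc j (s xs) == (i xs).+1)) (Hk).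
exact: c_eqn (c_nthc (c_var a.+1 0 erefl) (c_shift Hs)) (c_succ (c_shift Hi)).
Qed.

Lemma c_inSc a v c : rcomp a v -> rcomp a c -> rcomp a (fun xs => inSc (v xs) (c xs)).
Proof.
move=> Hv Hc; apply: c_andb; last exact: c_negb (c_memc (Hv) (c_usnd Hc)).
exact: c_orb (c_leq Hv (c_const a n)) (c_memc Hv (c_ufst Hc)).
Qed.

Lemma c_badc a k v s : rcomp a k -> rcomp a v -> rcomp a s -> rcomp a (fun xs => badc (k xs) (v xs) (s xs)).
Proof.
move=> Hk Hv Hs; apply: c_Rc (Hk) _ (Hs); exact: c_modc (Hv) (c_const a _).
Qed.

Lemma c_ddc a k c s : rcomp a k -> rcomp a c -> rcomp a s -> rcomp a (fun xs => ddc (k xs) (c xs) (s xs)).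
Proof.
move=> Hk Hc Hs; apply: (c_bmin (P := fun v xs => inSc v (c xs) && badc (k xs) v (s xs))); last exact: c_exp (Hk).
have H0 := c_var a.+1 0 erefl.
exact: c_andb (c_inSc H0 (c_shift Hc)) (c_badc (c_shift Hk) H0 (c_shift Hs)).
Qed.

Lemma c_ggc a k c s : rcomp a k -> rcomp a c -> rcomp a s -> rcomp a (fun xs => ggc (k xs) (c xs) (s xs)).
Proof.
move=> Hk Hc Hs; apply: (c_bmin (P := fun v xs => inSc v (c xs) && ~~ badc (k xs) v (s xs))); last exact: c_exp (Hk).
have H0 := c_var a.+1 0 erefl.
exact: c_andb (c_inSc H0 (c_shift Hc)) (c_negb (c_badc (c_shift Hk) H0 (c_shift Hs))).
Qed.

Lemma c_stepc a k c s : rcomp a k -> rcomp a c -> rcomp a s -> rcomp a (fun xs => stepc (k xs) (c xs) (s xs)).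
Proof.
move=> Hk Hc Hs; apply: c_if (Hc); first exact: c_ltn (c_ddc (Hk) (Hc) Hs) (c_exp Hk).
apply: c_cpair; apply: c_succ; apply: c_cpair.
- exact: c_add (c_ggc Hk Hc Hs) (c_exp Hk).
- exact: c_ufst Hc.
- exact: c_ddc Hk Hc Hs.
- exact: c_usnd Hc.
Qed.

Lemma c_statec a t s : rcomp a t -> rcomp a s -> rcomp a (fun xs => statec (t xs) (s xs)).
Proof.
move=> Ht Hs.
apply: (c_loop (st := fun i r xs => stepc (LL n + i) r (s xs))) (Ht) (c_const a _) _.
apply: c_stepc; last first.
  apply: (c_ext _ (c_shift (c_shift Hs))) => xs _; case: xs => [|? [|? ?]] //=; by rewrite drop0.
  exact: c_var a.+2 1 erefl.
exact: c_add (c_const a.+2 _) (c_var a.+2 0 erefl).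
Qed.
End Prog.


Lemma c_dl a f : rcomp a f -> rcomp a (fun xs => dl (f xs)).
Proof.
move=> Hf; apply: (c_bmin (P := fun l xs => (f xs).+1 < 2 ^ l.+1)); last exact: c_succ Hf.
exact: c_ltn (c_succ (c_shift Hf)) (c_exp (c_succ (c_var a.+1 0 erefl))).
Qed.

Lemma c_dv a f : rcomp a f -> rcomp a (fun xs => dv (f xs)).
Proof. move=> Hf; exact: c_sub (c_succ Hf) (c_exp (c_dl Hf)). Qed.

Lemma c_Hf n : rcomp 1 (fun xs => Hf n (nth 0 xs 0)).
Proof.
have H0 := c_var 1 0 erefl.
have Hc := c_ufst H0; have Hs := c_usnd H0.
apply: c_if (c_const 1 0) _; first exact: c_eqn (c_iterc (c_dl Hc) Hs) (c_const 1 0).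
apply: c_succ; apply: c_orb; first exact: c_ltn (c_dl Hc) (c_const 1 _).
apply: c_inSc (c_dv Hc) _.
exact: c_statec (c_sub (c_dl Hc) (c_const 1 _)) Hs.
Qed.

Definition sumc L s := loop L 0 (fun j r => r + nthc j s * 2 ^ j).
Definition Kf L z := if iterc L (usnd z) == 0 then 0 else (sumc L (usnd z)).+1.

Lemma c_Kf L : rcomp 1 (fun xs => Kf L (nth 0 xs 0)).
Proof.
have H0 := c_var 1 0 erefl.
have Hs := c_usnd H0.
apply: c_if (c_const 1 0) _; first exact: c_eqn (c_iterc (c_const 1 L) Hs) (c_const 1 0).
apply: c_succ.
apply: (c_loop (st := fun j r xs => r + nthc j (usnd (nth 0 xs 0)) * 2 ^ j)) (c_const 1 L) (c_const 1 0) _.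
apply: c_add (c_var 3 1 erefl) (c_mul _ (c_exp (c_var 3 0 erefl))).
apply: c_nthc (c_var 3 0 erefl) _.
apply: (c_ext _ (c_usnd (c_var 3 2 erefl))) => xs _; by rewrite nth_drop.
Qed.

Lemma t2comp_of F p (N val : nat -> nat) :
  rcomp 1 (fun xs => F (nth 0 xs 0)) ->
  (forall c m, F (cpair c (code_seq (Defs.prefix p m))) = if m <= N c then 0 else (val c).+1) ->
  exists P, t2comp P p val.
Proof.
move=> [P HP] HF.
have HP1 : forall z, evalR P [:: z] (F z) := fun z => HP [:: z] erefl.
exists P => c; exists (N c).+1; split.
  by have := HP1 (cpair c (code_seq (Defs.prefix p (N c).+1))); rewrite HF ltnn.
move=> j Hj; have := HP1 (cpair c (code_seq (Defs.prefix p j))).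
by rewrite HF -ltnS Hj.
Qed.

Lemma iterc_prefix p l m : (iterc l (code_seq (Defs.prefix p m)) == 0) = (m <= l).
Proof. by rewrite iterc_code code0 -size_eq0 size_drop size_mkseq subn_eq0. Qed.

Lemma nthc_prefix p j m : j < m -> nthc j (code_seq (Defs.prefix p m)) = p j.
Proof. by move=> H; rewrite nthc_code ?size_mkseq // nth_mkseq. Qed.

Lemma Kf_ok L p c m : Kf L (cpair c (code_seq (Defs.prefix p m))) =
  if m <= L then 0 else (\sum_(j < L) p j * 2 ^ j).+1.
Proof.
rewrite /Kf usnd_cpair iterc_prefix; case: ifP => // H.
congr S; rewrite /sumc.
have : L <= L by [].
elim: {-2}L => [|l IH] Hl; first by rewrite big_ord0.
rewrite /= IH ?(ltnW Hl) // big_ord_recr /= nthc_prefix //.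
lia.
Qed.


Definition Rtrue (p : baire) k i := has (fun j => p j == i.+1) (iota 0 k).

Lemma Rc_prefix p k i m : k <= m -> Rc k i (code_seq (Defs.prefix p m)) = Rtrue p k i.
Proof.
move=> Hk; rewrite /Rc /bmin -{2}(size_iota 0 k) -has_find /Rtrue.
apply: eq_in_has => j; rewrite mem_iota add0n => /andP[_ Hj].
by rewrite nthc_prefix // (leq_trans Hj Hk).
Qed.

Lemma dv_lt c : dv c < 2 ^ dl c.
Proof.
have Hw : c.+1 < 2 ^ c.+1 by apply: ltn_expl.
have Hl : dl c < c.+1 := leq_ltn_trans (bmin_wit (P := fun l => c.+1 < 2 ^ l.+1) Hw (ltnSn c)) (ltnSn c).
have := bmin_P Hl; rewrite -/(dl c) /dv expnS; lia.
Qed.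

Lemma memc0 v : memc v 0 = false.
Proof. by have := memc_code v [::]. Qed.

Section Corr.
Variables (n s : nat).
Definition Rs k i := Rc k i s.

Lemma statec0 : statec n 0 s = cpair 0 0. Proof. by []. Qed.
Lemma statecS t : statec n t.+1 s = stepc n (LL n + t) (statec n t s) s. Proof. by []. Qed.

Lemma statec_corr t : (forall t', t' <= t -> uniq (cur n Rs t')) ->
  exists Rm, (exists Ad, statec n t s = cpair (code_seq Ad) (code_seq Rm)) /\
    all (fun v => v < 2 ^ (LL n + t)) Rm /\
    forall v, inSc n v (statec n t s) = (v \in cur n Rs t).
Proof.
elim: t => [|t IH] HU.
  exists [::]; split; first by exists [::].
  split => // v; rewrite statec0 /inSc ufst_cpair usnd_cpair memc0 cur0 mem_iota.
  by rewrite orbF andbT add0n ltnS.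
have [Rm [[Ad E] [HRm Hin]]] := IH (fun t' Ht' => HU t' (leq_trans Ht' (leqnSn t))).
have Ucur := HU t (leqnSn t).
set k := LL n + t.
have Ed : ddc n k (statec n t s) s = dd n Rs k (cur n Rs t).
  apply: eq_bmin => v; rewrite Hin /badc modcE ?expn_gt0 //.
have Eg : ggc n k (statec n t s) s = gg n Rs k (cur n Rs t).
  apply: eq_bmin => v; rewrite Hin /badc modcE ?expn_gt0 //.
rewrite statecS curS /stepc /stepS -/k Ed Eg.
case: ifP => Hd; last first.
  exists Rm; split; first by exists Ad.
  split => //; apply/allP => v Hv; move/(allP HRm): Hv => /= Hv.
  rewrite /k addnS expnS; lia.
set d := dd n Rs k (cur n Rs t); set g := gg n Rs k (cur n Rs t).
exists (d :: Rm); split.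
  by exists ((g + 2 ^ k) :: Ad); rewrite E ufst_cpair usnd_cpair.
split.
  rewrite /= addnS expnS -/k; apply/andP; split; first lia.
  apply/allP => v Hv; move/(allP HRm): Hv => /= Hv; rewrite /k; lia.
move=> v.
have Hin' := Hin v; rewrite E /inSc ufst_cpair usnd_cpair !memc_code in Hin'.
rewrite E /inSc !ufst_cpair !usnd_cpair.
rewrite -[(cpair (g + 2 ^ k) (code_seq Ad)).+1]/(code_seq ((g + 2 ^ k) :: Ad)).
rewrite -[(cpair d (code_seq Rm)).+1]/(code_seq (d :: Rm)).
rewrite !memc_code !in_cons (mem_rem_uniq _ Ucur) inE.
have Hdk : d < 2 ^ k by [].
case: eqP => [->|Hne] /=.
  rewrite orbT /= negb_or; apply/andP; split.
    apply/eqP => Eq; move: Hdk; rewrite -Eq; lia.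
  apply/negP => /(allP HRm) /=; rewrite -/k; lia.
rewrite -Hin'.
by case: (v <= n); case: (v \in Ad); case: (v == d); case: (v \in Rm).
Qed.

End Corr.

Section HfOk.
Variables (n : nat) (p : baire) (i0 : nat).
Hypothesis Hi0 : i0 <= n.
Hypothesis HR0 : forall k, Rtrue p k i0 = false.

Definition Sfp k := cur n (Rtrue p) (k - LL n).

Lemma Hf_ok c m : Hf n (cpair c (code_seq (Defs.prefix p m))) =
  if m <= dl c then 0 else (qname (LL n) Sfp c).+1.
Proof.
rewrite /Hf ufst_cpair usnd_cpair iterc_prefix; case: ifP => // Hm.
congr S; rewrite /qname /Tset /decode size_wi idx_wi modn_small ?dv_lt //.
case: (ltnP (dl c) (LL n)) => //= HL.
set t := dl c - LL n.
have Eq : forall t', t' <= t -> cur n (Rs (code_seq (Defs.prefix p m))) t' = cur n (Rtrue p) t'.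
  move=> t' Ht'; apply: cur_ext => k i Hk; rewrite /Rs Rc_prefix //.
  move: Hm; rewrite /t in Ht'; lia.
have HU : forall t', t' <= t -> uniq (cur n (Rs (code_seq (Defs.prefix p m))) t').
  move=> t' Ht'; rewrite Eq //; by have [] := cur_inv Hi0 HR0 t'.
have [Rm [_ [_ Hin]]] := statec_corr HU.
by rewrite Hin Eq /Sfp.
Qed.
End HfOk.

Definition Rinf (p : baire) (i : nat) : bool :=
  if excluded_middle_informative (exists j, p j = i.+1) then true else false.

Lemma Rtrue_mono p k k' i : k <= k' -> Rtrue p k i -> Rtrue p k' i.
Proof.
move=> Hk /hasP [j Hj Ej]; apply/hasP; exists j => //.
move: Hj; rewrite !mem_iota !add0n => H; exact: leq_trans H Hk.
Qed.

Lemma Rtrue_inf1 p i : exists K, forall k, K <= k -> Rtrue p k i = Rinf p i.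
Proof.
rewrite /Rinf; case: excluded_middle_informative => [[j Hj]|Hn].
  exists j.+1 => k Hk; apply/hasP; exists j; last by rewrite Hj.
  by rewrite mem_iota add0n.
exists 0 => k _; apply/hasP => [[j _ /eqP Hj]]; apply: Hn; by exists j.
Qed.

Lemma Rtrue_inf p n : exists k1, forall k i, k1 <= k -> i <= n -> Rtrue p k i = Rinf p i.
Proof.
elim: n => [|n [k1 IH]].
  have [K HK] := Rtrue_inf1 p 0; exists K => k i Hk; rewrite leqn0 => /eqP ->; exact: HK.
have [K HK] := Rtrue_inf1 p n.+1; exists (maxn k1 K) => k i; rewrite geq_max => /andP[H1 H2].
rewrite leq_eqVlt => /orP[/eqP ->|Hi]; first exact: HK.
exact: IH.
Qed.

Lemma idx_bprefix_sum (y : nat -> bool) k : idx (bprefix y k) = \sum_(j < k) y j * 2 ^ j.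
Proof. elim: k => [|k IH]; first by rewrite big_ord0. by rewrite idx_bprefixS IH big_ord_recr. Qed.


Lemma t2comp_prog P F p (N val : nat -> nat) :
  (forall z, evalR P [:: z] (F z)) ->
  (forall c m, F (cpair c (code_seq (Defs.prefix p m))) = if m <= N c then 0 else (val c).+1) ->
  t2comp P p val.
Proof.
move=> HP1 HF c; exists (N c).+1; split.
  by have := HP1 (cpair c (code_seq (Defs.prefix p (N c).+1))); rewrite HF ltnn.
move=> j Hj; have := HP1 (cpair c (code_seq (Defs.prefix p j))).
by rewrite HF -ltnS Hj.
Qed.

Definition x0p n i0 j := if j < LL n then odd (i0 %/ 2 ^ j) else false.

Lemma x0p_idx n i0 k : i0 <= n -> LL n <= k -> idx (bprefix (x0p n i0) k) = i0.
Proof.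
move=> Hi Hk.
have low : forall k, k <= LL n -> idx (bprefix (x0p n i0) k) = i0 %% 2 ^ k.
  elim => [|k' IH] Hk'; first by rewrite expn0 modn1.
  by rewrite idx_bprefixS IH ?(ltnW Hk') // /x0p Hk' expnSr modm2 // expn_gt0.
rewrite -(subnKC Hk); elim: (k - LL n) => [|d IH].
  by rewrite addn0 low // modn_small // (leq_ltn_trans Hi (hL1 n)).
by rewrite addnS idx_bprefixS IH /x0p ltnNge leq_addr /= mul0n addn0.
Qed.

Theorem pos_part n : sW_le (C_fin n) (C_sharp n.+1).
Proof.
have [PH HPH] := c_Hf n; have [PK HPK] := c_Kf (LL n).
exists PK, PH => D G HG p A HpA HAne.
have [i Hi] := set0Pn _ HAne.
set i0 := nat_of_ord i.
have Hi0 : i0 <= n by rewrite -ltnS ltn_ord.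
have HR0 : forall k, Rtrue p k i0 = false.
  move=> k; apply/hasP => [[j _ /eqP Ej]]; exact: (proj1 (HpA i) Hi j Ej).
set q := qname (LL n) (Sfp n p).
have Hq : t2comp PH p q.
  apply: (t2comp_prog (F := Hf n) (N := dl)) => [z|c m]; first exact: (HPH [:: z] erefl).
  exact: (Hf_ok Hi0 HR0).
have [k1 Hk1] := Rtrue_inf p n.
have [t0 Ht0] := eventual Hi0 HR0 Hk1.
have Hinv := cur_inv Hi0 HR0.
have [Htree Hsharp] : is_tree q /\ tree_sharp n.+1 q.
  apply: sharp_tree; [exact: hL1 | exact: hL2 | | | ].
  - move=> k Hk; have [U S Al] := Hinv (k - LL n); rewrite /Sfp; split => //.
    by rewrite subnKC in Al.
  - move=> k v Hk; rewrite /Sfp subSn // => /(cur_prefix Hi0 HR0).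
    by rewrite subnKC.
  - exists (LL n + t0) => k v Hk HL; rewrite /Sfp subSn //.
    have [E _] := Ht0 (k - LL n) ltac:(lia).
    rewrite E => Hv; rewrite Hv.
    have [_ _ Al] := Hinv (k - LL n); rewrite subnKC // in Al.
    apply/negP => /(allP Al) /=; lia.
set A' := fun x : nat -> bool => forall k, inT q (bprefix x k).
have Hd : delta (closed_sharp n.+1) q A' by [].
have Hm : mdom (C_sharp n.+1) A'.
  exists (x0p n i0) => k; rewrite inT_qname /Tset size_bprefix.
  case: ltnP => //= Hk; rewrite x0p_idx // /Sfp; exact: cur_i0.
have [HDq [y [Hy HAy]]] := HG q A' Hd Hm.
set lab := idx (bprefix y (LL n)).
have Hr : t2comp PK (G q) (fun _ => lab).
  apply: (t2comp_prog (F := Kf (LL n)) (N := fun _ => LL n)) => [z|c m]; first exact: (HPK [:: z] erefl).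
  rewrite Kf_ok; case: ifP => // _; congr S.
  rewrite /lab idx_bprefix_sum; apply: eq_bigr => j _; by rewrite Hy.
have Hk0 := HAy (LL n + t0).
rewrite inT_qname /Tset size_bprefix ltnNge leq_addr /= /Sfp addKn in Hk0.
have [_ Hbad] := Ht0 t0 (leqnn t0).
have Hlab := cur_lab Hi0 HR0 Hk0; have Hnb := Hbad _ Hk0.
rewrite idx_bprefix_mod ?leq_addr // -/lab in Hlab Hnb.
have Hlt : lab < n.+1 by rewrite ltnS.
exists q; split => //; split => //; exists (fun _ => lab); split => //.
exists (Ordinal Hlt); split => //=.
apply/HpA => /= k Hk; move: Hnb; rewrite /Rinf.
case: excluded_middle_informative => // [] [].
by exists k.
Qed.

Theorem proposition25 : forall n : nat, sW_lt (C_fin n) (C_sharp n.+1).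
Proof. move=> n; split; [exact: pos_part | exact: neg_part]. Qed.
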